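(* Let $F_2$ be the free group on $a,b$ and $T=[a,b]=aba^{-1}b^{-1}$. For every positive integer $n$, $$(ab)^n=\prod_{i=1}^{n-1}\left(\prod_{j=0}^{i-1}[a^ib^{i-1-j},T^{-1}]\,T^{-1}\right)\cdot a^nb^n$$ in $F_2$, where the products are ordered from left to right with increasing $i$ and, for fixed $i$, increasing $j$.
   Context: Commutator convention: $[x,y]=xyx^{-1}y^{-1}$. An empty product equals $1$. *)

(* Defs.v *)
From HB Require Import structures.
From mathcomp Require Import all_boot.
Set Implicit Arguments. Unset Strict Implicit. Unset Printing Implicit Defensive.
Local Open Scope group_scope.

(* The paper's commutator convention: [x,y] = x y x^-1 y^-1
   (NOT mathcomp's commg, which is x^-1 y^-1 x y). *)
Definition pcomm (G : groupType) (x y : G) : G := x * y * x^-1 * y^-1.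

(* Main.v *)
Require Import Defs.
From HB Require Import structures.
From mathcomp Require Import all_boot.
Local Open Scope group_scope.

Lemma inner_prod (G : groupType) (a b : G) (i m : nat) : (m <= i)%N ->
  let T := pcomm a b in
  \prod_(0 <= j < m) (pcomm (a ^+ i * b ^+ (i - 1 - j)) T^-1 * T^-1)
  = a ^+ i * b ^+ i * a * (b ^+ m)^-1 * a^-1 * (b ^+ (i - m))^-1 * (a ^+ i)^-1.
Proof.
move=> + T; elim: m => [|m IH] Hm.
  rewrite big_geq // subn0 invg1 mulg1.
  by rewrite !mulgK mulgV.

rewrite big_nat_recr //= IH; last exact: ltnW.
have -> : (i - m = (i - 1 - m).+1)%N.
  by rewrite -subnDA add1n subnSK.
set r := (i - 1 - m)%N.
have -> : (i - m.+1 = r)%N by rewrite /r -subnDA add1n.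
rewrite /pcomm /T (expgS b m) (expgSr b r) !invgM !invgK.
set A := a ^+ i; set Bi := b ^+ i; set Bm := b ^+ m; set Br := b ^+ r.
by rewrite !mulgA ?(mulgK, mulgVK).
Qed.

Theorem lemma2p13 (G : groupType) (a b : G) (n : nat) : (0 < n)%N ->
  let T := pcomm a b in
  (a * b) ^+ n =
  (\prod_(1 <= i < n) \prod_(0 <= j < i) (pcomm (a ^+ i * b ^+ (i - 1 - j)) T^-1 * T^-1))
  * (a ^+ n * b ^+ n).
Proof.
move=> + T; elim: n => [//|n IH] _.
case: n IH => [|n] IH.
  by rewrite big_geq // mul1g.
rewrite big_nat_recr //= inner_prod // subnn invg1 mulg1.
rewrite (expgSr (a * b)) IH //.
rewrite (expgSr a n.+1) (expgSr b n.+1).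
set A := a ^+ n.+1; set B := b ^+ n.+1.
by rewrite !mulgA ?(mulgK, mulgVK).
Qed.
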